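(* For $\boldsymbol\theta\in\boldsymbol\Theta$ and $i\in\mathcal S,a\in\mathcal A$ define $$D_{i,a}(\boldsymbol\theta)=\pi^{\boldsymbol\theta}(i)\Big\{\sum_{j\in\mathcal S}p^a(i,j)g^{\boldsymbol\theta}(j)+r(i,a)-\beta r(i,a)^2+2\beta J^{\boldsymbol\theta}_\mu r(i,a)\Big\}.$$ Then $D_{i,a}(\boldsymbol\theta)$ is the derivative of the combined metric with respect to $\theta_{i,a}$, in the sense that for every $\boldsymbol\theta'\in\boldsymbol\Theta$, $$\frac{\mathrm d}{\mathrm dt}J^{\boldsymbol\theta+t(\boldsymbol\theta'-\boldsymbol\theta)}_{\mu,\sigma}\Big|_{t=0^+}=\sum_{i\in\mathcal S}\sum_{a\in\mathcal A}(\theta'_{i,a}-\theta_{i,a})\,D_{i,a}(\boldsymbol\theta).$$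
   Context: Let $\mathcal S=\{1,\dots,S\}$ be a finite state space and $\mathcal A$ a finite action set, with transition probabilities $p^a(i,j)\ge0$ ($\sum_j p^a(i,j)=1$) and rewards $r(i,a)\in\mathbb R$. Standing assumption: for every deterministic map $d:\mathcal S\to\mathcal A$, the matrix with entries $p^{d(i)}(i,j)$ is irreducible. The randomized policy space is $\boldsymbol\Theta=\{\boldsymbol\theta=(\theta_{i,a}):\theta_{i,a}\ge0,\ \sum_a\theta_{i,a}=1\ \forall i\}$ ($\theta_{i,a}$ = probability of action $a$ in state $i$); it is convex. Under $\boldsymbol\theta$ the transition matrix is $P^{\boldsymbol\theta}(i,j)=\sum_a p^a(i,j)\theta_{i,a}$; it is irreducible with unique stationary distribution $\boldsymbol\pi^{\boldsymbol\theta}$ having positive entries. The mean is $J^{\boldsymbol\theta}_\mu=\sum_i\pi^{\boldsymbol\theta}(i)\sum_a\theta_{i,a}r(i,a)$; for fixed $\beta>0$, $f^{\boldsymbol\theta}(i)=\sum_a\theta_{i,a}[r(i,a)-\beta(r(i,a)-J^{\boldsymbol\theta}_\mu)^2]$ and $J^{\boldsymbol\theta}_{\mu,\sigma}=\sum_i\pi^{\boldsymbol\theta}(i)f^{\boldsymbol\theta}(i)$. The potential $\mathbf g^{\boldsymbol\theta}$ is any solution of $\mathbf g^{\boldsymbol\theta}=\mathbf f^{\boldsymbol\theta}-J^{\boldsymbol\theta}_{\mu,\sigma}\mathbf 1+P^{\boldsymbol\theta}\mathbf g^{\boldsymbol\theta}$ (the right-hand side of the claimed formula does not depend on the choice). 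*)

(* Defs.v *)
From HB Require Import structures.
From mathcomp Require Import all_boot all_order all_algebra.
From mathcomp Require Import all_classical all_reals all_analysis.
Set Implicit Arguments. Unset Strict Implicit. Unset Printing Implicit Defensive.
Import Order.TTheory GRing.Theory Num.Theory.
Local Open Scope ring_scope.
Local Open Scope classical_set_scope.

Section MDP.
Variables (R : realType) (S A : finType).

Fixpoint mpow (P : S -> S -> R) (n : nat) : S -> S -> R :=
  match n with
  | O => fun i j => (i == j)%:R
  | n'.+1 => fun i j => \sum_(k : S) mpow P n' i k * P k j
  end.

Definition irreducible (P : S -> S -> R) : Prop :=
  forall i j : S, exists n : nat, 0 < mpow P n i j.

Definition is_policy (th : S -> A -> R) : Prop :=
  (forall i a, 0 <= th i a) /\ (forall i, \sum_(a : A) th i a = 1).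

Definition Pth (p : S -> A -> S -> R) (th : S -> A -> R) : S -> S -> R :=
  fun i j => \sum_(a : A) p i a j * th i a.

Definition is_stationary (P : S -> S -> R) (pi : S -> R) : Prop :=
  (forall i, 0 <= pi i) /\ \sum_(i : S) pi i = 1 /\
  (forall j, pi j = \sum_(i : S) pi i * P i j).

(* "the" stationary distribution (unique under irreducibility), by choice *)
Definition stat_dist (P : S -> S -> R) : {ffun S -> R} :=
  xget 0 [set pi : {ffun S -> R} | is_stationary P pi].

Definition pith p th : S -> R := fun i => stat_dist (Pth p th) i.

Definition Jmu p (r : S -> A -> R) th : R :=
  \sum_(i : S) pith p th i * \sum_(a : A) th i a * r i a.

Definition fth p r (beta : R) th : S -> R := fun i =>
  \sum_(a : A) th i a * (r i a - beta * (r i a - Jmu p r th) ^+ 2).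

Definition Jmusig p r beta th : R :=
  \sum_(i : S) pith p th i * fth p r beta th i.

Definition is_potential p r beta th (g : S -> R) : Prop :=
  forall i, g i = fth p r beta th i - Jmusig p r beta th
                  + \sum_(j : S) Pth p th i j * g j.

Definition Dder p r beta th (g : S -> R) (i : S) (a : A) : R :=
  pith p th i * (\sum_(j : S) p i a j * g j + r i a - beta * r i a ^+ 2
                 + 2 * beta * Jmu p r th * r i a).

End MDP.

(* Main.v *)
Require Import Defs.
From HB Require Import structures.
From mathcomp Require Import all_boot all_order all_algebra.
From mathcomp Require Import all_classical all_reals all_analysis.
From mathcomp Require Import ring lra.
Import Order.TTheory GRing.Theory Num.Theory.
Local Open Scope ring_scope.
Local Open Scope classical_set_scope.

Lemma ex_min (R : realType) (T : finType) (F : T -> R) (x0 : T) :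
  exists i0, forall i, F i0 <= F i.
Proof.
case: (@arg_minP _ _ T x0 xpredT F erefl) => i _ H.
by exists i => j; apply: H.
Qed.

Section P1.
Variables (R : realType) (S : finType).

Lemma sum_ge_term (T : finType) (F : T -> R) (i0 : T) :
  (forall i, 0 <= F i) -> F i0 <= \sum_i F i.
Proof.
move=> h; rewrite (bigD1 i0) //= lerDl; apply: sumr_ge0 => i _; exact: h.
Qed.

Lemma sum_delta (x : S -> R) j : \sum_i x i * (i == j)%:R = x j.
Proof.
rewrite (bigD1 j) //= eqxx mulr1 big1 ?addr0 // => i /negbTE ->; by rewrite mulr0.
Qed.

Lemma mpow_ge0 (P : S -> S -> R) n i j :
  (forall i j, 0 <= P i j) -> 0 <= mpow P n i j.
Proof.
move=> hP; elim: n i j => [|n IH] i j /=; first by rewrite ler0n.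
by apply: sumr_ge0 => k _; apply: mulr_ge0.
Qed.

Lemma mpow_inv (P : S -> S -> R) (x : S -> R) n :
  (forall j, x j = \sum_i x i * P i j) ->
  forall j, x j = \sum_i x i * mpow P n i j.
Proof.
move=> hx; elim: n => [|n IH] j /=; first by rewrite sum_delta.
under eq_bigr do rewrite mulr_sumr.
rewrite exchange_big /= hx; apply: eq_bigr => k _.
rewrite IH mulr_suml; apply: eq_bigr => i _; by rewrite mulrA.
Qed.

Lemma mpow_pos_mono (P Q : S -> S -> R) n :
  (forall i j, 0 <= P i j) -> (forall i j, 0 <= Q i j) ->
  (forall i j, 0 < Q i j -> 0 < P i j) ->
  forall i j, 0 < mpow Q n i j -> 0 < mpow P n i j.
Proof.
move=> hP hQ hQP; elim: n => [|n IH] i j //= hpos.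
case: (pselect (exists k, 0 < mpow Q n i k * Q k j)) => [[k hk]|hn]; last first.
  exfalso; move: hpos; rewrite ltNge => /negP; apply.
  apply: sumr_le0 => k _; rewrite leNgt; apply/negP => h; apply: hn; by exists k.
have hk1 : 0 < mpow Q n i k.
  rewrite lt0r mpow_ge0 // andbT; apply/eqP => e; move: hk; by rewrite e mul0r ltxx.
have hk2 : 0 < Q k j.
  rewrite lt0r hQ andbT; apply/eqP => e; move: hk; by rewrite e mulr0 ltxx.
have hs := sum_ge_term _ (fun k => mpow P n i k * P k j) k
  (fun l => mulr_ge0 (mpow_ge0 _ _ _ _ hP) (hP l j)).
apply: (lt_le_trans _ hs); apply: mulr_gt0; [exact: IH|exact: hQP].
Qed.

Lemma inv_zero (P : S -> S -> R) (y : S -> R) j0 :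
  (forall i j, 0 <= P i j) -> irreducible P ->
  (forall i, 0 <= y i) -> (forall j, y j = \sum_i y i * P i j) ->
  y j0 = 0 -> forall i, y i = 0.
Proof.
move=> hP hirr hy hinv h0 i.
have [n hn] := hirr i j0.
have := sum_ge_term _ (fun k => y k * mpow P n k j0) i
   (fun k => mulr_ge0 (hy k) (mpow_ge0 _ _ _ _ hP)).
rewrite -mpow_inv // h0 => hle.
apply/eqP; rewrite eq_le hy andbT.
by rewrite -(pmulr_lle0 _ hn).
Qed.

Lemma stat_pos (P : S -> S -> R) pi :
  (forall i j, 0 <= P i j) -> irreducible P -> is_stationary P pi ->
  forall j, 0 < pi j.
Proof.
move=> hP hirr [h0 [h1 hinv]] j.
rewrite lt0r h0 andbT; apply/eqP => e.
have hz := @inv_zero P pi j hP hirr h0 hinv e.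
have : \sum_i pi i = 0 by apply: big1 => i _; exact: hz i.
by rewrite h1 => /eqP; rewrite oner_eq0.
Qed.

Lemma stat_uniq (P : S -> S -> R) pi (x : S -> R) :
  (forall i j, 0 <= P i j) -> irreducible P -> is_stationary P pi ->
  (forall j, x j = \sum_i x i * P i j) ->
  forall j, x j = (\sum_i x i) * pi j.
Proof.
move=> hP hirr hpi hx j.
have hpos := @stat_pos P pi hP hirr hpi.
have [i0 hi0] := @ex_min _ _ (fun i => x i / pi i) j.
set c := x i0 / pi i0.
have hy : forall i, 0 <= x i - c * pi i.
  move=> i; rewrite subr_ge0 -ler_pdivlMr //; exact: hi0.
have hyinv : forall j, x j - c * pi j = \sum_i (x i - c * pi i) * P i j.
  move=> k; case: hpi => _ [_ hpinv].
  under eq_bigr do rewrite mulrBl.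
  rewrite sumrB -hx [in LHS]hpinv mulr_sumr; congr (_ - _).
  by apply: eq_bigr => i _; rewrite mulrA.
have hc : x i0 - c * pi i0 = 0.
  by rewrite /c divfK ?subrr // gt_eqF.
have hz := @inv_zero P _ i0 hP hirr hy hyinv hc.
have hxe : forall i, x i = c * pi i by move=> i; apply/eqP; rewrite -subr_eq0 (hz i).
case: hpi => _ [hs _].
by rewrite hxe; congr (_ * _); under eq_bigr do rewrite hxe; rewrite -mulr_sumr hs mulr1.
Qed.

End P1.


Section P2.
Variables (R : realType) (S : finType).

Lemma sum_ev (F : S -> R) :
  \sum_(i < #|S|) F (enum_val i) = \sum_s F s.
Proof. by rewrite -big_enum_val. Qed.

Lemma sum_deltaT {T : finType} (x : T -> R) j : \sum_i x i * (i == j)%:R = x j.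
Proof.
rewrite (bigD1 j) //= eqxx mulr1 big1 ?addr0 // => i /negbTE ->; by rewrite mulr0.
Qed.

Lemma ex_stat (P : S -> S -> R) (x0 : S) :
  (forall i j, 0 <= P i j) -> (forall i, \sum_j P i j = 1) ->
  exists pi : S -> R, is_stationary P pi.
Proof.
move=> hP hP1.
pose M : 'M[R]_#|S| := \matrix_(i, j) ((i == j)%:R - P (enum_val i) (enum_val j)).
have hdet : \det M == 0.
  rewrite -det_tr; apply/det0P; exists (const_mx 1 : 'rV[R]_#|S|).
    apply/eqP => /matrixP /(_ 0 (enum_rank x0)); rewrite !mxE => /eqP.
    by rewrite oner_eq0.
  apply/rowP => j; rewrite !mxE.
  under eq_bigr do rewrite !mxE mul1r.
  rewrite sumrB.
  have -> : \sum_i ((j == i)%:R : R) = 1.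
    by rewrite -[RHS](sum_deltaT (fun _ => 1) j); apply: eq_bigr => i _; rewrite mul1r eq_sym.
  by rewrite (sum_ev (fun s => P (enum_val j) s)) hP1 subrr.
move/det0P: hdet => [v vn0 vM].
pose x s := v 0 (enum_rank s).
have hx : forall j, x j = \sum_i x i * P i j.
  move=> j; have := congr1 (fun A : 'M[R]_(1, #|S|) => A 0 (enum_rank j)) vM; rewrite !mxE.
  under eq_bigr do rewrite mxE mulrBr enum_rankK.
  rewrite sumrB sum_deltaT.
  have e : forall i, v 0 i * P (enum_val i) j = (fun s => x s * P s j) (enum_val i).
    by move=> i; rewrite /x enum_valK.
  under eq_bigr do rewrite e.
  by rewrite (sum_ev (fun s => x s * P s j)) => /eqP; rewrite subr_eq0 => /eqP.
have [j0 hj0] : exists j, x j != 0.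
  apply/not_existsP => hn; move/eqP: vn0; apply; apply/rowP => i.
  rewrite mxE; apply/eqP; apply/negPn/negP => h; apply: (hn (enum_val i)).
  by rewrite /x enum_valK.
pose y j := `|x j|.
have hy0 : forall j, 0 <= y j by move=> j; exact: normr_ge0.
have hle : forall j, y j <= \sum_i y i * P i j.
  move=> j; rewrite /y [X in `|X|]hx; apply: le_trans (ler_norm_sum _ _ _) _.
  by apply: ler_sum => i _; rewrite normrM (ger0_norm (hP i j)).
have hsum : \sum_j \sum_i y i * P i j = \sum_j y j.
  rewrite exchange_big /=; apply: eq_bigr => i _.
  by rewrite -mulr_sumr hP1 mulr1.
have hy : forall j, y j = \sum_i y i * P i j.
  have hz : \sum_j (\sum_i y i * P i j - y j) = 0 by rewrite sumrB hsum subrr.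
  move=> j; apply/eqP; rewrite eq_sym -subr_eq0; apply/eqP.
  by apply: (psumr_eq0P _ hz) => // k _; rewrite subr_ge0.
pose s := \sum_j y j.
have hs : 0 < s.
  apply: lt_le_trans (@sum_ge_term R _ y j0 hy0); by rewrite /y normr_gt0.
exists (fun j => y j / s); split; [|split].
- by move=> i; apply: divr_ge0 => //; exact: ltW.
- by rewrite -mulr_suml divff // gt_eqF.
- move=> j; rewrite hy mulr_suml; apply: eq_bigr => i _; by rewrite mulrAC.
Qed.

Lemma bnd_inv (P : S -> S -> R) (pi : S -> R) :
  (forall i j, 0 <= P i j) -> (forall i, \sum_j P i j = 1) -> irreducible P ->
  is_stationary P pi ->
  exists C : R, forall u : S -> R, \sum_i u i = 0 ->
    forall j, `|u j| <= C * \sum_i `|u i - \sum_k u k * P k i|.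
Proof.
move=> hP hP1 hirr hpi.
pose M : 'M[R]_#|S| :=
  \matrix_(i, j) ((i == j)%:R - P (enum_val i) (enum_val j) + pi (enum_val j)).
have hrow : forall (v : 'rV[R]_#|S|) j,
    (v *m M) 0 (enum_rank j) = v 0 (enum_rank j)
       - \sum_s v 0 (enum_rank s) * P s j + (\sum_s v 0 (enum_rank s)) * pi j.
  move=> v j; rewrite !mxE.
  under eq_bigr do rewrite mxE enum_rankK mulrDr mulrBr.
  rewrite big_split sumrB sum_deltaT /= -mulr_suml.
  have e1 : forall i, v 0 i * P (enum_val i) j
      = (fun s => v 0 (enum_rank s) * P s j) (enum_val i).
    by move=> i; rewrite /= enum_valK.
  have e2 : forall i, v 0 i = (fun s => v 0 (enum_rank s)) (enum_val i).
    by move=> i; rewrite /= enum_valK.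
  under eq_bigr do rewrite e1.
  under [X in _ + X * _]eq_bigr do rewrite e2.
  by rewrite (sum_ev (fun s => v 0 (enum_rank s) * P s j)) (sum_ev (fun s => v 0 (enum_rank s))).
have hM : M \in unitmx.
  rewrite unitmxE unitfE; apply/negP => /det0P [v vn0 vM].
  pose x s := v 0 (enum_rank s).
  have hr : forall j, x j - \sum_i x i * P i j + (\sum_i x i) * pi j = 0.
    by move=> j; rewrite -hrow vM mxE.
  case: (hpi) => _ [hpi1 _].
  have hsx : \sum_i x i = 0.
    have hs : \sum_j (x j - \sum_i x i * P i j + (\sum_i x i) * pi j) = 0.
      by apply: big1 => j _; exact: hr j.
    rewrite big_split sumrB /= -mulr_sumr hpi1 mulr1 in hs.
    rewrite exchange_big /= in hs.
    have e : \sum_i \sum_j x i * P i j = \sum_i x i.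
      by apply: eq_bigr => i _; rewrite -mulr_sumr hP1 mulr1.
    by rewrite e subrr add0r in hs.
  have hx : forall j, x j = \sum_i x i * P i j.
    move=> j; apply/eqP; rewrite -subr_eq0; apply/eqP.
    by have := hr j; rewrite hsx mul0r addr0.
  have hu := @stat_uniq R S P pi x hP hirr hpi hx.
  move/eqP: vn0; apply; apply/rowP => i.
  by rewrite mxE -(enum_valK i) -/(x _) hu hsx mul0r.
pose Mi := invmx M.
pose C := \sum_i \sum_j `|Mi i j|.
have hC : forall i j, `|Mi i j| <= C.
  move=> i j; apply: le_trans (@sum_ge_term R _ _ j (fun _ => normr_ge0 _)) _.
  exact: (@sum_ge_term R _ _ i (fun i => sumr_ge0 _ (fun _ _ => normr_ge0 _))).
exists C => u hu j.
pose U : 'rV[R]_#|S| := \row_i u (enum_val i).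
pose w k := u k - \sum_l u l * P l k.
have hW : forall i, (U *m M) 0 i = w (enum_val i).
  move=> i; rewrite -{1}(enum_valK i) hrow.
  have e : forall s, U 0 (enum_rank s) = u s by move=> s; rewrite mxE enum_rankK.
  under eq_bigr do rewrite e.
  under [X in _ + X * _]eq_bigr do rewrite e.
  by rewrite e hu mul0r addr0.
have hU : U = (U *m M) *m Mi by rewrite mulmxK.
have -> : u j = U 0 (enum_rank j) by rewrite mxE enum_rankK.
rewrite hU mxE.
apply: le_trans (ler_norm_sum _ _ _) _.
apply: (@le_trans _ _ (\sum_i `|w (enum_val i)| * C)).
  apply: ler_sum => i _; rewrite normrM hW.
  by apply: ler_wpM2l => //; exact: normr_ge0.
by rewrite -mulr_suml (sum_ev (fun k => `|w k|)) mulrC.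
Qed.

End P2.


Section P3.
Variables (R : realType) (S A : finType).
Variable (p : S -> A -> S -> R).
Hypothesis hp0 : forall i a j, 0 <= p i a j.
Hypothesis hp1 : forall i a, \sum_(j : S) p i a j = 1.

Lemma Pth_ge0 th : is_policy th -> forall i j, 0 <= Pth p th i j.
Proof.
case=> h0 _ i j; apply: sumr_ge0 => a _; exact: mulr_ge0.
Qed.

Lemma Pth_sum1 th : is_policy th -> forall i, \sum_j Pth p th i j = 1.
Proof.
case=> _ h1 i; rewrite /Pth exchange_big /= -(h1 i); apply: eq_bigr => a _.
by rewrite -mulr_suml hp1 mul1r.
Qed.

Lemma policy_irr th :
  (forall d : S -> A, irreducible (fun i j => p i (d i) j)) ->
  is_policy th -> irreducible (Pth p th).
Proof.
move=> hirr hth.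
have hd : forall i, exists a, 0 < th i a.
  move=> i; apply/not_existsP => hn; case: hth => _ /(_ i) h1.
  have : \sum_a th i a <= 0.
    by apply: sumr_le0 => a _; rewrite leNgt; apply/negP => h; apply: (hn a).
  by rewrite h1 ler10.
have [d hd'] := choice hd.
move=> i j; have [n hn] := hirr d i j; exists n.
apply: (@mpow_pos_mono R S (Pth p th) (fun i j => p i (d i) j) n _ _ _ i j hn).
- exact: Pth_ge0.
- by move=> k l; exact: hp0.
- move=> k l hkl; rewrite /Pth.
  have hs := @sum_ge_term R _ (fun a => p k a l * th k a) (d k)
     (fun a => mulr_ge0 (hp0 _ _ _) (proj1 hth k a)).
  apply: lt_le_trans hs; exact: mulr_gt0.
Qed.

Lemma policy_conv (th th' : S -> A -> R) (t : R) : is_policy th -> is_policy th' -> 0 <= t <= 1 ->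
  is_policy (fun i a => th i a + t * (th' i a - th i a)).
Proof.
move=> [h0 h1] [h0' h1'] /andP [t0 t1]; split.
  move=> i a; have := h0 i a; have := h0' i a; nra.
move=> i; rewrite big_split /= -mulr_sumr sumrB h1 h1' subrr mulr0 addr0 //.
Qed.

Lemma pith_stat (x0 : S) th :
  (forall d : S -> A, irreducible (fun i j => p i (d i) j)) ->
  is_policy th -> is_stationary (Pth p th) (pith p th).
Proof.
move=> hirr hth.
have [pi hpi] := @ex_stat R S (Pth p th) x0 (@Pth_ge0 th hth) (@Pth_sum1 th hth).
have hf : is_stationary (Pth p th) [ffun i => pi i].
  case: hpi => [a [b c]]; split; [|split].
  - by move=> i; rewrite ffunE.
  - by under eq_bigr do rewrite ffunE.
  - by move=> j; rewrite ffunE c; apply: eq_bigr => i _; rewrite ffunE.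
rewrite /pith /stat_dist.
have := @xgetPex _ 0 [set pi : {ffun S -> R} | is_stationary (Pth p th) pi].
by apply; exists [ffun i => pi i].
Qed.

End P3.

Section SM.
Variable R : realType.

Definition sm (f : R -> R) := exists K, forall t, 0 < t <= 1 -> `|f t| <= K * t.
Definition bd (f : R -> R) := exists K, forall t, 0 < t <= 1 -> `|f t| <= K.

Lemma sm_ext f g : (forall t, 0 < t <= 1 -> f t = g t) -> sm g -> sm f.
Proof. by move=> e [K h]; exists K => t ht; rewrite e //; exact: h. Qed.

Lemma bd_ext f g : (forall t, 0 < t <= 1 -> f t = g t) -> bd g -> bd f.
Proof. by move=> e [K h]; exists K => t ht; rewrite e //; exact: h. Qed.

Lemma sm_bd f : sm f -> bd f.
Proof.
case=> K h; exists `|K| => t /andP [t0 t1].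
apply: le_trans (h t _) _; first by rewrite t0 t1.
apply: le_trans (ler_norm _) _; rewrite normrM (gtr0_norm t0).
by rewrite -[X in _ <= X]mulr1 ler_wpM2l.
Qed.

Lemma bd_cst c : bd (fun _ => c).
Proof. by exists `|c|. Qed.

Lemma sm_id : sm id.
Proof. by exists 1 => t /andP [t0 _]; rewrite mul1r gtr0_norm. Qed.

Lemma smD f g : sm f -> sm g -> sm (fun t => f t + g t).
Proof.
move=> [K1 h1] [K2 h2]; exists (K1 + K2) => t ht.
by apply: le_trans (ler_normD _ _) _; rewrite mulrDl lerD ?h1 ?h2.
Qed.

Lemma smN f : sm f -> sm (fun t => - f t).
Proof. by move=> [K h]; exists K => t ht; rewrite normrN h. Qed.

Lemma smB f g : sm f -> sm g -> sm (fun t => f t - g t).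
Proof. by move=> hf hg; apply: smD => //; apply: smN. Qed.

Lemma bdD f g : bd f -> bd g -> bd (fun t => f t + g t).
Proof.
move=> [K1 h1] [K2 h2]; exists (K1 + K2) => t ht.
by apply: le_trans (ler_normD _ _) _; rewrite lerD ?h1 ?h2.
Qed.

Lemma bdN f : bd f -> bd (fun t => - f t).
Proof. by move=> [K h]; exists K => t ht; rewrite normrN h. Qed.

Lemma bdB f g : bd f -> bd g -> bd (fun t => f t - g t).
Proof. by move=> hf hg; apply: bdD => //; apply: bdN. Qed.

Lemma bdM f g : bd f -> bd g -> bd (fun t => f t * g t).
Proof.
move=> [K1 h1] [K2 h2]; exists (K1 * K2) => t ht; rewrite normrM.
by apply: ler_pM; rewrite ?normr_ge0 ?h1 ?h2.
Qed.

Lemma smM f g : sm f -> bd g -> sm (fun t => f t * g t).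
Proof.
move=> [K1 h1] [K2 h2]; exists (K1 * K2) => t ht; rewrite normrM.
rewrite mulrAC; apply: ler_pM; rewrite ?normr_ge0 ?h1 ?h2 //.
Qed.

Lemma bdsmM f g : bd f -> sm g -> sm (fun t => f t * g t).
Proof.
move=> hf hg; apply: (@sm_ext _ (fun t => g t * f t)); first by move=> t _; rewrite mulrC.
exact: smM.
Qed.

Lemma sm_div f : sm f -> bd (fun t => f t / t).
Proof.
move=> [K h]; exists K => t ht; have /andP [t0 _] := ht.
rewrite normrM normfV (gtr0_norm t0) ler_pdivrMr //; exact: h.
Qed.

Lemma sm_sum (I : finType) (F : I -> R -> R) :
  (forall i, sm (F i)) -> sm (fun t => \sum_i F i t).
Proof.
move=> hF; have [K hK] := choice hF.
exists (\sum_i K i) => t ht; rewrite mulr_suml.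
apply: le_trans (ler_norm_sum _ _ _) _; apply: ler_sum => i _; exact: hK.
Qed.

Lemma bd_sum (I : finType) (F : I -> R -> R) :
  (forall i, bd (F i)) -> bd (fun t => \sum_i F i t).
Proof.
move=> hF; have [K hK] := choice hF.
exists (\sum_i K i) => t ht.
apply: le_trans (ler_norm_sum _ _ _) _; apply: ler_sum => i _; exact: hK.
Qed.

Lemma sm_cvg (f : R -> R) (L : R) : sm (fun t => f t - L) -> f @ 0^'+ --> (L : R^o).
Proof.
move=> [K hK]; apply/cvgrPdist_le => e e0.
have hK1 : 0 < `|K| + 1 by rewrite ltr_pwDr // normr_ge0.
near=> t.
have t0 : 0 < t by near: t; exact: nbhs_right_gt.
have t1 : t < 1 by near: t; apply: nbhs_right_lt; exact: ltr01.
have te : t < e / (`|K| + 1).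
  by near: t; apply: nbhs_right_lt; rewrite divr_gt0.
rewrite distrC; apply: le_trans (hK t _) _; first by rewrite t0 ltW.
rewrite ltr_pdivlMr // in te.
apply: le_trans (ler_norm _) _; rewrite normrM (gtr0_norm t0).
have := normr_ge0 K; nra.
Unshelve. all: end_near.
Qed.

End SM.


Arguments sm {R}. Arguments bd {R}.
Arguments sm_ext {R f} g. Arguments bd_ext {R f} g.
Arguments sm_bd {R f}. Arguments bd_cst {R}. Arguments sm_id {R}.
Arguments smD {R f g}. Arguments smN {R f}. Arguments smB {R f g}.
Arguments bdD {R f g}. Arguments bdN {R f}. Arguments bdB {R f g}.
Arguments bdM {R f g}. Arguments smM {R f g}. Arguments bdsmM {R f g}.
Arguments sm_div {R f}. Arguments sm_sum {R I F}. Arguments bd_sum {R I F}.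

Arguments pith_stat {R S A p} hp0 hp1 x0 {th}.
Arguments policy_irr {R S A p} hp0 {th}.
Arguments Pth_ge0 {R S A p} hp0 {th}.
Arguments Pth_sum1 {R S A p} hp1 {th}.
Arguments policy_conv {R S A th th' t}.
Arguments bnd_inv {R S P pi}.

Section Main.
Variables (R : realType) (S A : finType).
Variables (p : S -> A -> S -> R) (r : S -> A -> R) (beta : R).
Hypothesis hp0 : forall i a j, 0 <= p i a j.
Hypothesis hp1 : forall i a, \sum_(j : S) p i a j = 1.
Hypothesis hirr : forall d : S -> A, irreducible (fun i j => p i (d i) j).
Variables (th th' : S -> A -> R).
Hypothesis hth : is_policy th.
Hypothesis hth' : is_policy th'.
Variable g : S -> R.
Hypothesis hg : is_potential p r beta th g.
Variable x0 : S.

Definition d i a := th' i a - th i a.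
Definition thT (t : R) := fun i a => th i a + t * (th' i a - th i a).
Definition P := Pth p th.
Definition dP i j := \sum_a p i a j * d i a.
Definition pi := pith p th.
Definition pT t := pith p (thT t).
Definition J := Jmu p r th.
Definition JT t := Jmu p r (thT t).
Definition Js := Jmusig p r beta th.
Definition JsT t := Jmusig p r beta (thT t).
Definition f := fth p r beta th.
Definition fT t := fth p r beta (thT t).

Lemma hpolT t : 0 <= t <= 1 -> is_policy (thT t).
Proof. exact: policy_conv. Qed.

Lemma hstat : is_stationary P pi.
Proof. exact: (pith_stat hp0 hp1 x0 hirr hth). Qed.

Lemma hstatT {t} : 0 < t <= 1 -> is_stationary (Pth p (thT t)) (pT t).
Proof.
move=> /andP [t0 t1]; apply: (pith_stat hp0 hp1 x0 hirr); apply: hpolT.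
by rewrite ltW.
Qed.

Lemma hPT t i j : Pth p (thT t) i j = P i j + t * dP i j.
Proof.
rewrite /Pth /P /dP /thT /d mulr_sumr -big_split; apply: eq_bigr => a _ /=; ring.
Qed.

Lemma hsd i : \sum_a d i a = 0.
Proof. by rewrite /d sumrB (proj2 hth i) (proj2 hth' i) subrr. Qed.

Lemma hpTP {t} : 0 < t <= 1 -> forall j,
  \sum_i pT t i * P i j = pT t j - t * \sum_i pT t i * dP i j.
Proof.
move=> ht j; case: (hstatT ht) => _ [_ hinv].
have e : pT t j = \sum_i pT t i * P i j + t * \sum_i pT t i * dP i j.
  rewrite {1}(hinv j) mulr_sumr -big_split; apply: eq_bigr => i _.
  rewrite hPT /=; ring.
by rewrite e addrK.
Qed.

Lemma pT_bd {t} : 0 < t <= 1 -> forall j, 0 <= pT t j <= 1.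
Proof.
move=> ht j; case: (hstatT ht) => h0 [h1 _]; rewrite h0 /= -h1.
exact: (@sum_ge_term R _ _ j h0).
Qed.

Lemma bd_pi j : bd (fun t => pT t j).
Proof.
exists 1 => t ht; have /andP [a b] := pT_bd ht j; by rewrite ger0_norm.
Qed.

Lemma sm_pi j : sm (fun t => pT t j - pi j).
Proof.
have hirrP := policy_irr hp0 hirr hth.
have [C hC] := bnd_inv (Pth_ge0 hp0 hth) (Pth_sum1 hp1 hth) hirrP hstat.
exists (`|C| * \sum_i \sum_k `|dP k i|) => t ht.
have /andP [t0 t1] := ht.
pose u k := pT t k - pi k.
have hu : \sum_i u i = 0.
  rewrite /u sumrB; case: (hstatT ht) => _ [-> _]; case: hstat => _ [-> _].
  by rewrite subrr.
have := hC u hu j; rewrite /u => hle.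
apply: le_trans hle _.
have hw : forall i, (pT t i - pi i) - \sum_k (pT t k - pi k) * P k i
                 = t * \sum_k pT t k * dP k i.
  move=> i; under eq_bigr do rewrite mulrBl.
  rewrite sumrB (hpTP ht i); case: hstat => _ [_ hinv].
  rewrite -(hinv i) /pi; ring.
under eq_bigr do rewrite hw.
have hX : 0 <= \sum_i `|t * \sum_k pT t k * dP k i|.
  by apply: sumr_ge0 => i _; exact: normr_ge0.
have h1 : C * \sum_i `|t * \sum_k pT t k * dP k i| <= `|C| * \sum_i `|t * \sum_k pT t k * dP k i|.
  by apply: ler_wpM2r => //; exact: ler_norm.
apply: le_trans h1 _.
rewrite -mulrA ler_wpM2l ?normr_ge0 // mulr_suml.
apply: ler_sum => i _; rewrite normrM (gtr0_norm t0) mulrC.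
apply: ler_wpM2r; first exact: ltW.
apply: le_trans (ler_norm_sum _ _ _) _; apply: ler_sum => k _.
rewrite normrM; have /andP [a b] := pT_bd ht k.
by rewrite ger0_norm // ler_piMl ?normr_ge0.
Qed.


Definition m i := \sum_a th i a * r i a.
Definition X t := \sum_i pT t i * \sum_a d i a * r i a.
Definition c i := \sum_j dP i j * g j.
Definition Af t i := \sum_a d i a * (r i a - beta * (r i a - JT t) ^+ 2).
Definition A0 i := \sum_a d i a * (r i a - beta * (r i a - J) ^+ 2).
Definition B t i := \sum_a th i a * (2 * r i a - J - JT t).

Lemma JT_eq t : JT t = \sum_i pT t i * m i + t * X t.
Proof.
rewrite /JT /Jmu /X mulr_sumr -big_split; apply: eq_bigr => i _ /=.
have e : \sum_a thT t i a * r i a = m i + t * \sum_a d i a * r i a.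
  rewrite /m mulr_sumr -big_split; apply: eq_bigr => a _ /=; rewrite /thT /d; ring.
rewrite e /pT; ring.
Qed.

Lemma JT_eq2 t : JT t - J = \sum_i ((pT t i - pi i) * m i + t * (pT t i * \sum_a d i a * r i a)).
Proof.
rewrite JT_eq /J /Jmu -/(m _) big_split /= -mulr_sumr /X.
have -> : \sum_i (pT t i - pi i) * m i = \sum_i pT t i * m i - \sum_i pi i * m i.
  by rewrite -sumrB; apply: eq_bigr => i _; rewrite mulrBl.
rewrite /m /pi; ring.
Qed.

Lemma sm_J : sm (fun t => JT t - J).
Proof.
apply: (sm_ext (fun t => \sum_i ((pT t i - pi i) * m i + t * (pT t i * \sum_a d i a * r i a)))).
  by move=> t _; exact: JT_eq2.
apply: sm_sum => i; apply: smD.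
- by apply: smM; [exact: sm_pi | exact: bd_cst].
- by apply: smM; [exact: sm_id | apply: bdM; [exact: bd_pi | exact: bd_cst]].
Qed.

Lemma bd_JT : bd JT.
Proof.
apply: (bd_ext (fun t => (JT t - J) + J)); first by move=> t _; rewrite subrK.
apply: bdD; [exact: sm_bd sm_J | exact: bd_cst].
Qed.

Lemma bd_X : bd X.
Proof.
apply: bd_sum => i; apply: bdM; [exact: bd_pi | exact: bd_cst].
Qed.

Lemma Js_eq t : 0 < t <= 1 ->
  JsT t - Js = \sum_i pT t i * (fT t i - f i) + t * \sum_i pT t i * c i.
Proof.
move=> ht.
have e1 : forall (F : S -> R) (G : S -> S -> R), \sum_i F i * \sum_j G i j * g j = \sum_j (\sum_i F i * G i j) * g j.
  move=> F G; transitivity (\sum_i \sum_j F i * G i j * g j).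
    by apply: eq_bigr => i _; rewrite mulr_sumr; apply: eq_bigr => j _; rewrite mulrA.
  by rewrite exchange_big; apply: eq_bigr => j _ /=; rewrite mulr_suml.
have hA : \sum_i pT t i * (\sum_j P i j * g j)
          = \sum_i pT t i * g i - t * \sum_i pT t i * c i.
  rewrite (e1 (pT t) P).
  have -> : \sum_i pT t i * c i = \sum_j (\sum_i pT t i * dP i j) * g j.
    by rewrite /c (e1 (pT t) dP).
  under eq_bigr => j _ do rewrite (hpTP ht j).
  rewrite mulr_sumr -sumrB; apply: eq_bigr => j _; ring.
have hf : forall i, f i = g i - \sum_j P i j * g j + Js.
  by move=> i; rewrite {1}(hg i) /f /Js /P; ring.
have hB : \sum_i pT t i * f i = Js + t * \sum_i pT t i * c i.
  transitivity (\sum_i pT t i * g i - \sum_i pT t i * (\sum_j P i j * g j)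
                 + Js * \sum_i pT t i).
    rewrite mulr_sumr -sumrB -big_split; apply: eq_bigr => i _ /=; rewrite hf; ring.
  case: (hstatT ht) => _ [-> _]; rewrite hA; ring.
have -> : JsT t = \sum_i pT t i * fT t i by [].
have -> : \sum_i pT t i * (fT t i - f i) = \sum_i pT t i * fT t i - \sum_i pT t i * f i.
  by rewrite -sumrB; apply: eq_bigr => i _; rewrite mulrBr.
rewrite hB; ring.
Qed.

Lemma fT_eq t i : fT t i - f i = t * Af t i + beta * (JT t - J) * B t i.
Proof.
rewrite /fT /f /fth -/(JT t) -/J /Af /B [t * _]mulr_sumr [beta * _ * _]mulr_sumr.
rewrite -big_split -sumrB; apply: eq_bigr => a _ /=; rewrite /thT /d; ring.
Qed.

Lemma L_eq : \sum_i \sum_a (th' i a - th i a) * Dder p r beta th g i a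
             = \sum_i pi i * (c i + A0 i).
Proof.
apply: eq_bigr => i _.
have e : c i = \sum_a d i a * \sum_j p i a j * g j.
  rewrite /c /dP; transitivity (\sum_j \sum_a p i a j * d i a * g j).
    by apply: eq_bigr => j _; rewrite mulr_suml.
  rewrite exchange_big; apply: eq_bigr => a _ /=; rewrite mulr_sumr.
  by apply: eq_bigr => j _; ring.
have e2 : A0 i = \sum_a (d i a * (r i a - beta * r i a ^+ 2 + 2 * beta * J * r i a)
                 - beta * J ^+ 2 * d i a).
  by apply: eq_bigr => a _; ring.
have e3 : \sum_a beta * J ^+ 2 * d i a = 0 by rewrite -mulr_sumr hsd mulr0.
rewrite e e2 sumrB e3 subr0 -big_split mulr_sumr; apply: eq_bigr => a _ /=.
by rewrite /Dder /d -/J /pi; ring.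
Qed.

Lemma Y_eq t : 0 < t <= 1 -> \sum_i pT t i * B t i = (JT t - J) - 2 * t * X t.
Proof.
move=> ht.
have hm : forall i, B t i = 2 * m i - (J + JT t).
  move=> i; transitivity (2 * m i - (J + JT t) * \sum_a th i a).
    rewrite /B /m [2 * _]mulr_sumr [(J + JT t) * _]mulr_sumr -sumrB.
    by apply: eq_bigr => a _; ring.
  by rewrite (proj2 hth i) mulr1.
transitivity (2 * \sum_i pT t i * m i - (J + JT t) * \sum_i pT t i).
  rewrite [2 * _]mulr_sumr [(J + JT t) * _]mulr_sumr -sumrB.
  by apply: eq_bigr => i _; rewrite hm; ring.
case: (hstatT ht) => _ [-> _].
rewrite [in RHS]JT_eq; rewrite -[in LHS](addrK (t * X t) (\sum_i pT t i * m i)).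
rewrite -JT_eq; ring.
Qed.

Lemma main_cvg :
  (fun t => (JsT t - Js) / t) @ 0^'+ -->
    (\sum_i \sum_a (th' i a - th i a) * Dder p r beta th g i a : R^o).
Proof.
apply: sm_cvg; rewrite L_eq.
apply: (sm_ext (fun t => \sum_i (pT t i - pi i) * c i
   + \sum_i ((pT t i - pi i) * Af t i + pi i * (Af t i - A0 i))
   + beta * ((JT t - J) / t) * \sum_i pT t i * B t i)).
  move=> t ht; have /andP [t0 _] := ht.
  have e1 : JsT t - Js = t * (\sum_i pT t i * Af t i + \sum_i pT t i * c i)
                + beta * (JT t - J) * \sum_i pT t i * B t i.
    rewrite (@Js_eq t ht); under eq_bigr do rewrite fT_eq.
    transitivity (\sum_i (t * (pT t i * Af t i) + t * (pT t i * c i)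
                    + beta * (JT t - J) * (pT t i * B t i))).
      rewrite [t * \sum_i _]mulr_sumr -big_split; apply: eq_bigr => i _ /=; ring.
    rewrite !big_split /= -!mulr_sumr; ring.
  rewrite e1.
  have hS : \sum_i pT t i * Af t i + \sum_i pT t i * c i - \sum_i pi i * (c i + A0 i)
     = \sum_i (pT t i - pi i) * c i
       + \sum_i ((pT t i - pi i) * Af t i + pi i * (Af t i - A0 i)).
    rewrite -big_split -sumrB -big_split; apply: eq_bigr => i _ /=; ring.
  rewrite -hS; field; by rewrite gt_eqF.
apply: smD; first apply: smD.
- by apply: sm_sum => i; apply: smM; [exact: sm_pi | exact: bd_cst].
- apply: sm_sum => i; apply: smD.
    apply: smM; first exact: sm_pi.
    apply: bd_sum => a; apply: bdM; first exact: bd_cst.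
    apply: bdB; first exact: bd_cst.
    apply: bdM; first exact: bd_cst.
    rewrite /GRing.exp /=.
    apply: bdM; apply: bdB; (exact: bd_cst || exact: bd_JT).
  apply: bdsmM; first exact: bd_cst.
  apply: (sm_ext (fun t => \sum_a (d i a * beta * (2 * r i a - J - JT t)) * (JT t - J))).
    by move=> t _; rewrite /Af /A0 -sumrB; apply: eq_bigr => a _; ring.
  apply: sm_sum => a; apply: bdsmM; last exact: sm_J.
  apply: bdM; first exact: bd_cst.
  apply: bdB; first exact: bd_cst.
  exact: bd_JT.
- apply: bdsmM; first by apply: bdM; [exact: bd_cst | exact: sm_div sm_J].
  apply: (sm_ext (fun t => (JT t - J) - 2 * t * X t)); first by move=> t ht; exact: Y_eq.
  apply: smB; first exact: sm_J.
  apply: smM; last exact: bd_X.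
  apply: bdsmM; [exact: bd_cst | exact: sm_id].
Qed.

End Main.



Theorem lemma3 (R : realType) (S A : finType)
  (p : S -> A -> S -> R) (r : S -> A -> R) (beta : R)
  (hbeta : 0 < beta)
  (hp0 : forall i a j, 0 <= p i a j)
  (hp1 : forall i a, \sum_(j : S) p i a j = 1)
  (hirr : forall d : S -> A, irreducible (fun i j => p i (d i) j))
  (th th' : S -> A -> R) (hth : is_policy th) (hth' : is_policy th')
  (g : S -> R) (hg : is_potential p r beta th g) :
  (fun t : R =>
     (Jmusig p r beta (fun i a => th i a + t * (th' i a - th i a))
      - Jmusig p r beta th) / t) @ 0^'+ -->
  \sum_(i : S) \sum_(a : A) (th' i a - th i a) * Dder p r beta th g i a.
Proof.
case: (pickP (fun _ : S => true)) => [x0 _|S0].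
  exact: (@main_cvg R S A p r beta hp0 hp1 hirr th th' hth hth' g hg x0).
have e0 : forall F : S -> R, \sum_(i : S) F i = 0.
  by move=> F; apply: big1 => i _; move: (S0 i).
apply: sm_cvg; exists 0 => t _.
by rewrite /Jmusig !e0 subrr mul0r subrr normr0 mul0r.
Qed.
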